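(* In the discrete first-price auction with $n=2$ bidders, in the model without ties, and with values drawn independently and uniformly from $X=\{0,1,\dots,x\}$, the symmetric equilibria are exactly $\beta(v)=\lfloor v/2\rfloor$ and $\beta(v)=\lceil v/2\rceil$.
   Context: Model. There are $n$ risk-neutral bidders competing for one indivisible object. Values and bids lie in $X=\{0,1,2,\dots,x\}$ for some $x\in\mathbb N$. Each bidder privately learns a value drawn independently and uniformly from $X$ (each value has probability $1/(x+1)$). Each bidder submits a bid in $X$. A (pure) strategy is a bidding function $\beta:X\to X$. In the model without ties, bidder $i$ wins iff $b_i>b_j$ for all $j\neq i$ (if the highest bid is tied, nobody wins). In the first-price auction, a bidder with value $v_i$ bidding $b_i$ gets expected payoff $(v_i-b_i)\Pr(i\text{ wins})$. An equilibrium is a profile of bidding functions such that each bidder's bidding function maximises their expected payoff given the others' bidding functions (a pure-strategy Bayes–Nash equilibrium) and such that no bidder uses a weakly dominated bidding function (a bidding function is weakly dominated if some other bidding function yields at least as high expected payoff against every profile of opponents' bidding functions, and strictly higher against some). A symmetric equilibrium (SE) is an equilibrium in which all bidders use the same bidding function. *)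

(* Defs.v *)
From mathcomp Require Import all_boot all_order all_algebra.
Set Implicit Arguments. Unset Strict Implicit. Unset Printing Implicit Defensive.
Import Order.TTheory GRing.Theory Num.Theory.
Local Open Scope ring_scope.

(* The value/bid set X = {0,...,x} is 'I_x.+1. A (pure) bidding function. *)
Definition bidfun (x : nat) := 'I_x.+1 -> 'I_x.+1.

(* Probability that a bidder bidding b wins (strictly highest bid, no ties)
   against an opponent with uniform value w in X using bidding function g. *)
Definition win_prob (x : nat) (b : 'I_x.+1) (g : bidfun x) : rat :=
  \sum_(w : 'I_x.+1) (x.+1%:R)^-1 * (if (g w < b)%N then 1 else 0).

Definition interim_payoff (x : nat) (v b : 'I_x.+1) (g : bidfun x) : rat :=
  ((v : nat)%:R - (b : nat)%:R) * win_prob b g.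

Definition payoff (x : nat) (f g : bidfun x) : rat :=
  \sum_(v : 'I_x.+1) (x.+1%:R)^-1 * interim_payoff v (f v) g.

Definition weakly_dominated (x : nat) (f : bidfun x) : Prop :=
  exists f' : bidfun x,
    (forall g : bidfun x, payoff f g <= payoff f' g) /\
    (exists g : bidfun x, payoff f g < payoff f' g).

Definition best_response (x : nat) (f g : bidfun x) : Prop :=
  forall f' : bidfun x, payoff f' g <= payoff f g.

Definition equilibrium (x : nat) (b1 b2 : bidfun x) : Prop :=
  best_response b1 b2 /\ best_response b2 b1 /\
  ~ weakly_dominated b1 /\ ~ weakly_dominated b2.

Definition symmetric_equilibrium (x : nat) (beta : bidfun x) : Prop :=
  equilibrium beta beta.

(* Main.v *)
Require Import Defs.
From mathcomp Require Import all_boot all_order all_algebra.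
From mathcomp Require Import zify ring lra.
Set Implicit Arguments. Unset Strict Implicit. Unset Printing Implicit Defensive.
Import Order.TTheory GRing.Theory Num.Theory.
Local Open Scope ring_scope.

Section S.
Variable x : nat.
Local Notation N := x.+1.

Definition cnt (b : 'I_N) (g : bidfun x) : nat :=
  (\sum_(w : 'I_N) (if (g w < b)%N then 1 else 0))%N.

Definition U (v b : 'I_N) (g : bidfun x) : int :=
  ((v : nat)%:Z - (b : nat)%:Z) * (cnt b g)%:Z.

Lemma Npos : (0 : rat) < N%:R. Proof. by rewrite ltr0n. Qed.

Lemma wp_cnt b g : win_prob b g = (cnt b g)%:R / N%:R.
Proof.
rewrite /win_prob /cnt natr_sum mulr_suml; apply: eq_bigr => w _.
by case: ifP; rewrite ?mul1r ?mul0r ?mulr1 ?mulr0.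
Qed.

Lemma interim_U v b g : interim_payoff v b g = (U v b g)%:~R / N%:R.
Proof. by rewrite /interim_payoff wp_cnt /U intrM intrB mulrA. Qed.

Lemma interim_le v b g v' b' g' :
  (interim_payoff v b g <= interim_payoff v' b' g') = (U v b g <= U v' b' g').
Proof. by rewrite !interim_U ler_pM2r ?invr_gt0 ?Npos // ler_int. Qed.

Lemma interim_lt v b g v' b' g' :
  (interim_payoff v b g < interim_payoff v' b' g') = (U v b g < U v' b' g').
Proof. by rewrite !interim_U ltr_pM2r ?invr_gt0 ?Npos // ltr_int. Qed.

Definition upd (f : bidfun x) (v b : 'I_N) : bidfun x :=
  fun w => if w == v then b else f w.

Lemma payoff_upd f v b g :
  payoff (upd f v b) g = payoff f g + N%:R^-1 * (interim_payoff v b g - interim_payoff v (f v) g).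
Proof.
rewrite /payoff (bigD1 v) //= [in RHS](bigD1 v) //= /upd eqxx.
rewrite (eq_bigr (fun w => N%:R^-1 * interim_payoff w (f w) g)); last first.
  by move=> w /negbTE ->.
ring.
Qed.
Lemma U_le_iff f v b g : payoff (upd f v b) g <= payoff f g <-> (U v b g <= U v (f v) g)%R.
Proof.
rewrite payoff_upd -interim_le.
rewrite gerDl pmulr_rle0 ?invr_gt0 ?Npos // subr_le0. done.
Qed.

Lemma BR f g : best_response f g -> forall v b, (U v b g <= U v (f v) g)%R.
Proof. by move=> H v b; apply/U_le_iff/H. Qed.

Lemma cnt_const b (k : 'I_N) : cnt b (fun _ => k) = if (k < b)%N then N else 0%N.
Proof.
rewrite /cnt sum_nat_const card_ord; case: ifP => _; lia.
Qed.

Lemma UD_nondom f : ~ weakly_dominated f -> forall v : 'I_N, (f v <= v)%N.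
Proof.
move=> H v; rewrite leqNgt; apply/negP => hlt; apply: H.
exists (upd f v v); split.
  move=> g; rewrite payoff_upd lerDl pmulr_rge0 ?invr_gt0 ?Npos // subr_ge0 interim_le.
  rewrite /U; move: (cnt _ _) (cnt _ _) => c c2. nia.
exists (fun _ => ord0).
rewrite payoff_upd ltrDl pmulr_rgt0 ?invr_gt0 ?Npos // subr_gt0 interim_lt.
rewrite /U !cnt_const /=.
have -> : (0 < f v)%N by lia.
move: (nat_of_ord (f v)) hlt => fv hlt.
have h1 : (v:nat)%:Z - fv%:Z < 0 by lia.
case: ifP => _; nia.
Qed.

Lemma sum_ind (n k : nat) :
  (\sum_(w < n) (if (w < k)%N then 1 else 0))%N = minn k n.
Proof.
elim: n => [|n IH]; first by rewrite big_ord0; lia.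
rewrite big_ord_recr /= IH; case: ifP; lia.
Qed.

Lemma cnt_lower (b : 'I_N) (g : bidfun x) (k : nat) : (k <= N)%N ->
  (forall w : 'I_N, (w < k)%N -> (g w < b)%N) -> (k <= cnt b g)%N.
Proof.
move=> kN H; apply: (@leq_trans (\sum_(w < N) (if (w < k)%N then 1 else 0))%N).
  by rewrite sum_ind; lia.
apply: leq_sum => w _; case: ifP => // /H ->; done.
Qed.

Lemma cnt_upper (b : 'I_N) (g : bidfun x) (k : nat) :
  (forall w : 'I_N, (k <= w)%N -> (b <= g w)%N) -> (cnt b g <= k)%N.
Proof.
move=> H; apply: (@leq_trans (\sum_(w < N) (if (w < k)%N then 1 else 0))%N); last first.
  by rewrite sum_ind; lia.
apply: leq_sum => w _; case: (ltnP w k) => [_|hw]; first by case: ifP.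
have hb := H w hw; case: ifP => //; lia.
Qed.

Lemma sum_strict (F G : 'I_N -> nat) j : (forall i, F i <= G i)%N -> (F j < G j)%N ->
  (\sum_i F i < \sum_i G i)%N.
Proof.
move=> H Hj; rewrite (bigD1 j) //= [X in (_ < X)%N](bigD1 j) //=.
by rewrite -addSn leq_add // leq_sum.
Qed.

Lemma cnt_strict (g : bidfun x) (b b' v' : 'I_N) : (b' < b)%N -> g v' = b' -> (cnt b' g < cnt b g)%N.
Proof.
move=> hb hv; apply: (@sum_strict _ _ v').
  move=> i; case: ifP => //; case: ifP => // h1 h2; lia.
by rewrite hv ltnn hb.
Qed.

Lemma mono f : best_response f f -> forall v v' : 'I_N, (v <= v')%N -> (f v <= f v')%N.
Proof.
move=> H v v' hvv; rewrite leqNgt; apply/negP => hgt.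
have h1 := BR H v (f v'); have h2 := BR H v' (f v).
have hc := cnt_strict hgt (erefl (f v')).
move: h1 h2; rewrite /U.
move: (cnt (f v) f) (cnt (f v') f) hc => c c' hc.
have hne : (v < v')%N.
  rewrite ltn_neqAle hvv andbT; apply/negP => /eqP hv.
  by move: hgt; rewrite (ord_inj hv) ltnn.
move: (nat_of_ord (f v)) (nat_of_ord (f v')) hgt => a a' ha.
move: (nat_of_ord v) (nat_of_ord v') hne hvv => n n' hn _ h1 h2.
nia.
Qed.

Lemma A1 (n p e c1 c0 : nat) : (2 <= n)%N -> (2 * p + 1 = n - 1 + e)%N -> (e <= 1)%N ->
  (n+1 <= c1)%N -> (c0 <= n-2)%N ->
  ((n)%:Z - (p.+1)%:Z) * (c1)%:Z <= ((n)%:Z - (p)%:Z) * (c0)%:Z -> False.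
Proof.
move=> *.
have h1 : 1 <= (n)%:Z - (p.+1)%:Z by lia.
have h2 : ((n)%:Z-(p.+1)%:Z)*((n)%:Z+1) <= ((n)%:Z - (p.+1)%:Z)*(c1)%:Z by nia.
have h3 : ((n)%:Z-(p)%:Z)*(c0)%:Z <= ((n)%:Z-(p)%:Z)*((n)%:Z-2) by nia.
nia.
Qed.

Lemma A2 (n p q c1 cq : nat) : (2 <= n)%N -> (p+2 <= q)%N -> (p + 2 <= n)%N -> (n <= c1)%N ->
  (cq <= n)%N ->
  ((n)%:Z - (p.+1)%:Z) * (c1)%:Z <= ((n)%:Z - (q)%:Z) * (cq)%:Z -> False.
Proof.
move=> *.
have [h|h] : (n)%:Z - (q)%:Z <= 0 \/ 0 < (n)%:Z - (q)%:Z by lia.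
  have : ((n)%:Z-(q)%:Z)*(cq)%:Z <= 0 by nia. nia.
have : ((n)%:Z-(q)%:Z)*(cq)%:Z <= ((n)%:Z-(p)%:Z-2)*(c1)%:Z by nia. nia.
Qed.

Lemma B1 (n p e q cp cq : nat) : (2 <= n)%N -> (2 * p = n - 1 + e)%N -> (e <= 1)%N -> (p+1 <= q)%N ->
  (n-1 <= cp)%N -> (cq <= n)%N ->
  ((n)%:Z - (p)%:Z) * (cp)%:Z <= ((n)%:Z - (q)%:Z) * (cq)%:Z -> False.
Proof.
move=> *.
have h1 : ((n)%:Z-(p)%:Z)*((n)%:Z-1) <= ((n)%:Z-(p)%:Z)*(cp)%:Z by nia.
have [h|h] : (n)%:Z - (q)%:Z <= 0 \/ 0 < (n)%:Z - (q)%:Z by lia.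
  have : ((n)%:Z-(q)%:Z)*(cq)%:Z <= 0 by nia. nia.
have : ((n)%:Z-(q)%:Z)*(cq)%:Z <= ((n)%:Z-(p)%:Z-1)*(n)%:Z by nia. nia.
Qed.

Lemma main_fwd f : best_response f f -> (forall v : 'I_N, (f v <= v)%N) ->
  forall e : nat, (e <= 1)%N -> (forall v : 'I_N, (v : nat) = 1%N -> (f v : nat) = e) ->
  forall v : 'I_N, (f v : nat) = (((v : nat) + e) %/ 2)%N.
Proof.
move=> H HD e he h1 v0.
suff: forall n, forall v : 'I_N, (v : nat) = n -> (f v : nat) = ((n + e) %/ 2)%N.
  by move=> /(_ _ v0 erefl).
elim/ltn_ind => n IH v vn.
have hv0 := HD v.
have hvx := ltn_ord v.
case: (ltnP n 2) => hn.
  case: (n =P 1%N) => [hn1|hn1].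
    by rewrite (h1 v) ?vn // hn1; lia.
  lia.
have IH' : forall w : 'I_N, (w < n)%N -> (f w : nat) = (((w : nat) + e) %/ 2)%N.
  by move=> w hw; apply: (IH w hw w erefl).
set w1 : 'I_N := inord (n - 1).
have w1v : (w1 : nat) = (n - 1)%N by rewrite inordK; lia.
set p := ((n - 1 + e) %/ 2)%N.
have hp : (f w1 : nat) = p by rewrite IH' ?w1v //; lia.
have monov : forall w : 'I_N, (n <= w)%N -> (f v <= f w)%N.
  by move=> w hw; apply: (mono H); lia.
have hge : (p <= f v)%N by rewrite -hp; apply: (mono H); lia.
have BRv := BR H v.
case: (boolP ((n - 1 + e) %% 2 == 1)%N) => hodd.
- move/eqP: hodd => hodd.
  case: (ltngtP (f v) p.+1) => hq.
  + have fvp : (f v : nat) = p by lia.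
    set b1 : 'I_N := inord p.+1.
    have b1v : (b1 : nat) = p.+1 by rewrite inordK; lia.
    have c1 : (n.+1 <= cnt b1 f)%N.
      apply: cnt_lower; first lia.
      move=> w hw; rewrite b1v; case: (ltnP w n) => hwn.
        rewrite (IH' w) //; lia.
      have -> : w = v by apply: ord_inj; lia.
      lia.
    have c0 : (cnt (f v) f <= n - 2)%N.
      apply: cnt_upper => w hw; case: (ltnP w n) => hwn.
        rewrite (IH' w) //; lia.
      have := monov w hwn; lia.
    have := BRv b1; rewrite /U b1v vn.
    move: (cnt b1 f) (cnt (f v) f) c1 c0 => C1 C0 c1 c0.
    rewrite fvp => hh; exfalso; apply: (A1 _ _ he _ _ hh); lia.
  + exfalso.
    set b1 : 'I_N := inord p.+1.
    have b1v : (b1 : nat) = p.+1 by rewrite inordK; lia.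
    have c1 : (n <= cnt b1 f)%N.
      apply: cnt_lower; first lia.
      move=> w hw; rewrite b1v; rewrite (IH' w) //; lia.
    have c0 : (cnt (f v) f <= n)%N.
      apply: cnt_upper => w hw; apply: monov; lia.
    have := BRv b1; rewrite /U b1v vn.
    move: (cnt b1 f) (cnt (f v) f) c1 c0 => C1 C0 c1 c0.
    move: (nat_of_ord (f v)) hq => q hq hh.
    apply: (A2 (p := p) (q := q) _ _ _ c1 c0 hh); lia.
  + rewrite hq; lia.
- move/eqP: hodd => hodd.
  case: (leqP (f v) p) => hq; first lia.
  exfalso.
  have c1 : (n - 1 <= cnt (f w1) f)%N.
    apply: cnt_lower; first lia.
    move=> w hw; rewrite hp (IH' w) //; lia.
  have c0 : (cnt (f v) f <= n)%N.
    apply: cnt_upper => w hw; apply: monov; lia.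
  have := BRv (f w1); rewrite /U hp vn.
  move: (cnt (f w1) f) (cnt (f v) f) c1 c0 => C1 C0 c1 c0.
  move: (nat_of_ord (f v)) hq => q hq hh.
  apply: (B1 (p := p) (e := e) _ _ he _ c1 c0 hh); lia.
Qed.

Lemma K (d c : int) : -1 <= c <= 2 -> d * c <= 2 * (d * d).
Proof.
move=> hc.
have [h|h] : d <= -1 \/ 0 <= d by lia.
  have : -d <= d * d by nia. nia.
have [h2|h2] : d = 0 \/ 1 <= d by lia.
  by rewrite h2 !mul0r.
have : d <= d * d by nia. nia.
Qed.
Lemma K1 (d c : int) : -1 <= c <= 1 -> d * c <= d * d.
Proof.
move=> hc.
have [h|h] : d <= -1 \/ 0 <= d by lia.
  have : -d <= d * d by nia. nia.
have [h2|h2] : d = 0 \/ 1 <= d by lia.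
  by rewrite h2 !mul0r.
have : d <= d * d by nia. nia.
Qed.
Lemma Q (q r e b : int) : 0 <= r <= 1 -> 0 <= e <= 1 ->
 (2 * q + r - e - b) * (2 * b - e) <= (2 * q + r - e - q) * (2 * q - e).
Proof.
move=> hr he.
have := @K (b - q) (2 * r - e) ltac:(lia).
move=> hk.
have -> : (2 * q + r - e - b) * (2 * b - e) = (2 * q + r - e - q) * (2 * q - e) + ((b - q) * (2 * r - e) - 2 * ((b-q)*(b-q))) by ring.
lia.
Qed.
Lemma Q2 (q r e b : int) : 0 <= r <= 1 -> 0 <= e <= 1 ->
 (2 * q + r - e - b) * b <= (2 * q + r - e - q) * q.
Proof.
move=> hr he.
have := @K1 (b - q) (r - e) ltac:(lia).
move=> hk.
have -> : (2 * q + r - e - b) * b = (2 * q + r - e - q) * q + ((b - q) * (r - e) - ((b-q)*(b-q))) by ring.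
lia.
Qed.

Lemma quad (v b e : nat) : (e <= 1)%N -> (e <= 2 * b)%N -> (b < v)%N ->
  (v%:Z - b%:Z) * (2 * b - e)%N%:Z <= (v%:Z - ((v + e) %/ 2)%N%:Z) * (2 * ((v + e) %/ 2) - e)%N%:Z.
Proof.
move=> he heb hbv.
have hq := divn_eq (v + e) 2.
have hr : ((v + e) %% 2 < 2)%N by rewrite ltn_mod.
move: ((v + e) %/ 2)%N ((v + e) %% 2)%N hq hr => q r hq hr.
have -> : ((2 * q - e)%N%:Z) = 2 * q%:Z - e%:Z by lia.
have -> : ((2 * b - e)%N%:Z) = 2 * b%:Z - e%:Z by lia.
have -> : v%:Z = 2 * q%:Z + r%:Z - e%:Z by lia.
apply: Q; lia.
Qed.

Lemma C1 (v b e : nat) : (e <= 1)%N -> (v <= x)%N ->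
  (v%:Z - b%:Z) * (minn (2 * b - e) N)%:Z <=
  (v%:Z - ((v + e) %/ 2)%N%:Z) * (minn (2 * ((v + e) %/ 2) - e) N)%:Z.
Proof.
move=> he hv.
have -> : minn (2 * ((v + e) %/ 2) - e) N = (2 * ((v + e) %/ 2) - e)%N by lia.
have hR : 0 <= (v%:Z - ((v + e) %/ 2)%N%:Z) * (2 * ((v + e) %/ 2) - e)%N%:Z.
  apply: mulr_ge0; lia.
case: (leqP v b) => hvb.
  apply: le_trans hR; apply: mulr_le0_ge0; lia.
case: (leqP e (2 * b)) => heb; last first.
  have -> : minn (2 * b - e) N = 0%N by lia.
  by rewrite mulr0.
apply: le_trans (quad he heb hvb).
apply: ler_wpM2l; lia.
Qed.

Lemma D1 (v b e : nat) : (e <= 1)%N ->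
  (v%:Z - b%:Z) * b%:Z <= (v%:Z - ((v + e) %/ 2)%N%:Z) * ((v + e) %/ 2)%N%:Z.
Proof.
move=> he.
have hq := divn_eq (v + e) 2.
have hr : ((v + e) %% 2 < 2)%N by rewrite ltn_mod.
move: ((v + e) %/ 2)%N ((v + e) %% 2)%N hq hr => q r hq hr.
have -> : v%:Z = 2 * q%:Z + r%:Z - e%:Z by lia.
apply: Q2; lia.
Qed.

Lemma cnt_half e (f : bidfun x) : (forall v : 'I_N, (f v : nat) = (((v : nat) + e) %/ 2)%N) ->
  forall b : 'I_N, cnt b f = minn (2 * b - e) N.
Proof.
move=> hf b; rewrite /cnt -sum_ind; apply: eq_bigr => w _; rewrite hf.
case: ifP; case: ifP => //; lia.
Qed.

Lemma BR_of (f g : bidfun x) : (forall v b, U v b g <= U v (f v) g) -> best_response f g.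
Proof.
move=> h f'; rewrite /payoff; apply: ler_sum => v _.
by rewrite ler_pM2l ?invr_gt0 ?Npos // interim_le.
Qed.

Lemma BR_half e (f : bidfun x) : (e <= 1)%N ->
  (forall v : 'I_N, (f v : nat) = (((v : nat) + e) %/ 2)%N) -> best_response f f.
Proof.
move=> he hf; apply: BR_of => v b; rewrite /U !(cnt_half hf) hf.
by apply: C1 => //; rewrite -ltnS.
Qed.

Lemma wp_const (b k : 'I_N) : win_prob b (fun _ => k) = if (k < b)%N then 1 else 0.
Proof.
rewrite wp_cnt cnt_const; case: ifP => _; last by rewrite mul0r.
by rewrite divff // pnatr_eq0.
Qed.

Lemma wp_lin (b : 'I_N) (g : bidfun x) :
  win_prob b g = N%:R^-1 * \sum_(w : 'I_N) win_prob b (fun _ => g w).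
Proof.
under [in RHS]eq_bigr do rewrite wp_const.
by rewrite mulr_sumr.
Qed.

Lemma payoff_lin (f g : bidfun x) :
  payoff f g = N%:R^-1 * \sum_(w : 'I_N) payoff f (fun _ => g w).
Proof.
rewrite /payoff exchange_big /= mulr_sumr; apply: eq_bigr => v _.
rewrite /interim_payoff -mulr_sumr -mulr_sumr wp_lin.
ring.
Qed.

Lemma sum_ind_rat (n k : nat) :
  \sum_(w < n) (if (w < k)%N then 1 else 0 : rat) = (minn k n)%:R.
Proof.
rewrite -sum_ind natr_sum; apply: eq_bigr => w _; by case: ifP.
Qed.

Lemma T_eq (f : bidfun x) :
  \sum_(k : 'I_N) payoff f (fun _ => k) =
  \sum_(v : 'I_N) N%:R^-1 * (((v : nat)%:Z - (f v : nat)%:Z) * (f v : nat)%:Z)%:~R.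
Proof.
rewrite /payoff exchange_big /=; apply: eq_bigr => v _.
rewrite /interim_payoff.
under eq_bigr do rewrite wp_const.
rewrite -mulr_sumr -mulr_sumr sum_ind_rat.
have -> : minn (f v) N = f v by have := ltn_ord (f v); lia.
by rewrite intrM intrB.
Qed.

Lemma nondom_half e (f : bidfun x) : (e <= 1)%N ->
  (forall v : 'I_N, (f v : nat) = (((v : nat) + e) %/ 2)%N) -> ~ weakly_dominated f.
Proof.
move=> he hf [f' [Hle [g0 Hlt]]].
have HT : \sum_(k : 'I_N) payoff f' (fun _ => k) <= \sum_(k : 'I_N) payoff f (fun _ => k).
  rewrite !T_eq; apply: ler_sum => v _.
  rewrite ler_pM2l ?invr_gt0 ?Npos // ler_int hf.
  exact: D1.
have Hs : \sum_(k : 'I_N) (payoff f' (fun _ => k) - payoff f (fun _ => k)) = 0.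
  apply/eqP; rewrite eq_le; apply/andP; split.
    by rewrite sumrB subr_le0.
  by apply: sumr_ge0 => k _; rewrite subr_ge0.
have Heq : forall k : 'I_N, payoff f (fun _ => k) = payoff f' (fun _ => k).
  move=> k; apply/eqP; rewrite eq_sym -subr_eq0; apply/eqP.
  by apply: (psumr_eq0P _ Hs) => // i _; rewrite subr_ge0.
move: Hlt; rewrite !(payoff_lin _ g0).
by under eq_bigr do rewrite Heq; rewrite ltxx.
Qed.

Lemma half_eq e (f : bidfun x) : (e <= 1)%N ->
  (forall v : 'I_N, (f v : nat) = (((v : nat) + e) %/ 2)%N) -> symmetric_equilibrium f.
Proof.
move=> he hf; have H := BR_half he hf; have D := nondom_half he hf.
by split; [|split; [|split]].
Qed.
End S.

Theorem proposition2 (x : nat) (beta : bidfun x) :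
  symmetric_equilibrium beta <->
  ((forall v : 'I_x.+1, (beta v : nat) = (v : nat) %/ 2)%N \/
   (forall v : 'I_x.+1, (beta v : nat) = ((v : nat) + 1) %/ 2)%N).
Proof.
split.
- move=> [H [_ [HD _]]].
  have le := UD_nondom HD.
  set e := nat_of_ord (beta (inord 1)).
  have he : (e <= 1)%N.
    have hi : ((inord 1 : 'I_x.+1) <= 1)%N.
      case: (ltnP 1 x.+1) => h; first by rewrite inordK.
      have := ltn_ord (inord 1 : 'I_x.+1); lia.
    exact: leq_trans (le _) hi.
  have h1 : forall v : 'I_x.+1, (v : nat) = 1%N -> (beta v : nat) = e.
    move=> v hv; rewrite /e; congr (nat_of_ord (beta _)); apply: ord_inj.
    have h1x : (1 < x.+1)%N by rewrite -hv ltn_ord.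
    by rewrite inordK.
  have hm := main_fwd H le he h1.
  have [he0|he1] : (e = 0 \/ e = 1)%N by lia.
    by left => v; rewrite hm he0 addn0.
  by right => v; rewrite hm he1.
- move=> [hf|hf].
    by apply: (half_eq (e := 0)) => // v; rewrite addn0 hf.
  exact: (half_eq (e := 1)).
Qed.
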